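(* Let $c>0$, $F>1$, $s>0$ be constants. There exist constants $\varepsilon,\alpha_2>0$ depending only on $c,F$ such that for all sufficiently large $n$: if $Z^t\le\varepsilon n$ and $\lambda^t\le F$, then $$\mathbb E[Z^{t+1}-Z^t\mid x^t,\lambda^t]\ge\alpha_2.$$
   Context: Consider the SA-$(1,\lambda)$-EA on a dynamic monotone function: a function $f:\{0,1\}^n\to\mathbb R$ is monotone if $f(x)>f(y)$ whenever $x\ne y$ and $x_i\ge y_i$ for all $i$; $(f^t)_{t\ge0}$ is a sequence of monotone functions, $f^t$ possibly chosen adversarially depending on $x^t$. The algorithm (with constants $c>0$, $s>0$, $F>1$) maintains $x^t\in\{0,1\}^n$, real $\lambda^t\ge1$; in generation $t$ it creates $\lfloor\lambda^t\rceil$ (nearest integer) offspring, each independently by flipping every bit of $x^t$ independently with probability $c/n$; $x^{t+1}$ is an offspring maximizing $f^t$ (ties uniformly at random); $\lambda^{t+1}=\max\{1,\lambda^t/F\}$ if $f^t(x^{t+1})>f^t(x^t)$, else $\lambda^{t+1}=F^{1/s}\lambda^t$. $Z^t$ is the number of zero-bits of $x^t$. *)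

(* Defs.v *)
From HB Require Import structures.
From mathcomp Require Import all_boot all_order all_algebra.
From mathcomp Require Import reals.
Set Implicit Arguments. Unset Strict Implicit. Unset Printing Implicit Defensive.
Import Order.TTheory GRing.Theory Num.Theory.
Local Open Scope ring_scope.

Definition bits (n : nat) := {ffun 'I_n -> bool}.

Definition zeros (n : nat) (x : bits n) : nat := #|[set i | ~~ x i]|.

Definition monotone_fun (R : realType) (n : nat) (f : bits n -> R) : Prop :=
  forall x y : bits n, x != y -> (forall i, y i <= x i)%N -> f y < f x.

(* nearest integer (halves rounded up), as a natural number; used for lambda >= 1 *)
Definition round_nat (R : realType) (l : R) : nat := Num.truncn (l + 2^-1).

(* probability that standard bit mutation with rate c/n turns x into y *)
Definition mut_prob (R : realType) (n : nat) (c : R) (x y : bits n) : R :=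
  \prod_(i < n) (if x i == y i then 1 - c / n%:R else c / n%:R).

Definition best_set (R : realType) (n k : nat) (f : bits n -> R)
  (ys : {ffun 'I_k -> bits n}) : {set 'I_k} :=
  [set i | [forall j, f (ys j) <= f (ys i)]].

(* Expected value of Z(x^{t+1}) when x^t = x and k offspring are created:
   offspring independent by standard bit mutation, x^{t+1} uniformly random
   among the offspring (indices) maximising f. *)
Definition exp_next_zeros (R : realType) (n : nat) (c : R) (k : nat)
  (f : bits n -> R) (x : bits n) : R :=
  \sum_(ys : {ffun 'I_k -> bits n})
     (\prod_(i < k) mut_prob c x (ys i)) *
     ((\sum_(i in best_set f ys) (zeros (ys i))%:R) / (#|best_set f ys|)%:R).

(* E[Z^{t+1} - Z^t | x^t = x, lambda^t = l] for the SA-(1,lambda)-EA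
   with fitness f^t = f *)
Definition drift_Z (R : realType) (n : nat) (c l : R) (f : bits n -> R)
  (x : bits n) : R :=
  exp_next_zeros c (round_nat l) f x - (zeros x)%:R.

(* Main.v *)
Require Import Defs.
From HB Require Import structures.
From mathcomp Require Import all_boot all_order all_algebra.
From mathcomp Require Import reals.
From mathcomp Require Import ring lra.
Import Order.TTheory GRing.Theory Num.Theory.
Local Open Scope ring_scope.
Set Implicit Arguments. Unset Strict Implicit.

Section Aux.
Variable R : realType.

Lemma sum_ffun_prod (I J : finType) (G : I -> J -> R) :
  \sum_(f : {ffun I -> J}) \prod_i G i (f i) = \prod_i \sum_j G i j.
Proof. by rewrite bigA_distr_bigA. Qed.

Lemma marginal (I J : finType) (D : I -> J -> R) (h : J -> R) (j : I) :
  (forall i, \sum_y D i y = 1) ->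
  \sum_(f : {ffun I -> J}) (\prod_i D i (f i)) * h (f j) = \sum_y D j y * h y.
Proof.
move=> HD.
transitivity (\sum_(f : {ffun I -> J}) \prod_i (D i (f i) * (if i == j then h (f i) else 1))).
  by apply: eq_bigr => f _; rewrite big_split /= -big_mkcond /= big_pred1_eq.
rewrite (sum_ffun_prod (fun i y => D i y * (if i == j then h y else 1))).
rewrite (bigD1 j) //= [X in _ * X]big1 ?mulr1.
  by apply: eq_bigr => y _; rewrite eqxx.
move=> i Hi; rewrite -[RHS](HD i); apply: eq_bigr => y _; by rewrite (negbTE Hi) mulr1.
Qed.

Lemma prod_event (I J : finType) (D : I -> J -> R) (g : J -> bool) :
  \sum_(f : {ffun I -> J}) (\prod_i D i (f i)) * \prod_i (g (f i))%:R
  = \prod_i \sum_y D i y * (g y)%:R.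
Proof.
rewrite -(sum_ffun_prod (fun i y => D i y * (g y)%:R)).
by apply: eq_bigr => f _; rewrite big_split.
Qed.

Lemma bern_low (p : R) (m : nat) : 0 <= p <= 1 -> 1 - m%:R * p <= (1 - p) ^+ m.
Proof.
move=> /andP[p0 p1]; elim: m => [|m IH]; first by rewrite expr0 mul0r subr0.
rewrite exprS -natr1.
have h0 : 0 <= 1 - p by lra.
have : (1 - p) * (1 - m%:R * p) <= (1 - p) * (1 - p) ^+ m by rewrite ler_wpM2l.
have : 0 <= m%:R * p * p by rewrite mulr_ge0 // mulr_ge0.
nra.
Qed.

Lemma bern_up (p : R) (m : nat) : 0 <= p <= 1 -> (1 - p) ^+ m * (1 + m%:R * p) <= 1.
Proof.
move=> /andP[p0 p1]; elim: m => [|m IH]; first by rewrite expr0 mul0r addr0 mulr1.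
rewrite exprS -natr1.
have h0 : 0 <= (1 - p) ^+ m by rewrite exprn_ge0 //; lra.
have : (1 - p) * (1 + (m%:R + 1) * p) <= 1 + m%:R * p.
  have : 0 <= (m%:R + 1) * p * p by rewrite !mulr_ge0 // addr_ge0.
  nra.
move=> H.
have := ler_wpM2l h0 H.
move: IH; set u := (1 - p) ^+ m; set a := (1 - p) * _.
rewrite mulrCA -/a; lra.
Qed.

End Aux.

Definition bcnt n (x y : bits n) : nat := #|[set i | ~~ x i && y i]|.
Definition good n (x y : bits n) : bool := (bcnt x y == 0%N) && (y != x).

Lemma card_sum (I : finType) (P : pred I) : #|[set i | P i]| = (\sum_i P i)%N.
Proof. by rewrite cardsE -sum1_card big_mkcond. Qed.

Section Bits.
Variable R : realType.
Variables (n : nat) (c : R) (x : bits n).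
Let p := c / n%:R.
Let w := fun (i : 'I_n) (b : bool) => if x i == b then 1 - p else p.

Lemma mut_sum : \sum_y mut_prob c x y = 1.
Proof.
rewrite /mut_prob (sum_ffun_prod w) big1 // => i _.
by rewrite big_bool /w; case: (x i) => /=; ring.
Qed.

Lemma w_sum i : \sum_b w i b = 1.
Proof. by rewrite big_bool /w; case: (x i) => /=; ring. Qed.

Lemma exp_b : \sum_y mut_prob c x y * (bcnt x y)%:R = (zeros x)%:R * p.
Proof.
transitivity (\sum_j \sum_(y : bits n) (\prod_i w i (y i)) * (~~ x j && y j)%:R).
  rewrite exchange_big /=; apply: eq_bigr => y _.
  by rewrite /bcnt card_sum natr_sum mulr_sumr.
rewrite /zeros card_sum natr_sum mulr_suml; apply: eq_bigr => j _.
rewrite (@marginal _ _ _ w (fun b => (~~ x j && b)%:R) j); last exact: w_sum.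
by rewrite big_bool /w; case: (x j) => /=; ring.
Qed.

Lemma prob_good :
  \sum_y mut_prob c x y * (good x y)%:R = (1 - p) ^+ (zeros x) - (1 - p) ^+ n.
Proof.
have E : forall y : bits n, (good x y)%:R =
   \prod_i (x i || ~~ y i)%:R - (y == x)%:R :> R.
  move=> y; have -> : \prod_i (x i || ~~ y i)%:R = (bcnt x y == 0%N)%:R :> R.
    case: (boolP (bcnt x y == 0%N)) => Hb.
      rewrite big1 // => i _; move: Hb; rewrite /bcnt cards_eq0 => /eqP/setP/(_ i).
      by rewrite !inE; case: (x i); case: (y i).
    have [i Hi] : exists i, ~~ x i && y i.
      move: Hb; rewrite /bcnt cards_eq0 => /set0Pn [i]; rewrite inE; by exists i.
    by rewrite (bigD1 i) //=; move: Hi; case: (x i); case: (y i) => //=; rewrite mul0r.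
  rewrite /good /bcnt; case: (boolP (y == x)) => [/eqP ->|Hy] /=.
    have -> : [set i | ~~ x i & x i] = set0 by apply/setP => i; rewrite !inE andNb.
    by rewrite cards0 eqxx andbF subrr.
  by rewrite andbT subr0.
transitivity (\sum_(y : bits n) (\prod_i w i (y i)) * \prod_i (x i || ~~ y i)%:R
             - \sum_(y : bits n) (\prod_i w i (y i)) * (y == x)%:R).
  rewrite -sumrB; apply: eq_bigr => y _; by rewrite E mulrBr.
have -> : \sum_(y : bits n) (\prod_i w i (y i)) * \prod_i (x i || ~~ y i)%:R
    = \prod_i \sum_b w i b * (x i || ~~ b)%:R.
  rewrite -(sum_ffun_prod (fun i b => w i b * (x i || ~~ b)%:R)).
  by apply: eq_bigr => y _; rewrite big_split.
have -> : \sum_(y : bits n) (\prod_i w i (y i)) * (y == x)%:R = (1 - p) ^+ n.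
  transitivity (\sum_(y : bits n | y == x) \prod_i w i (y i)).
    by rewrite [RHS]big_mkcond /=; apply: eq_bigr => y _; case: (y == x); rewrite ?mulr1 ?mulr0.
  rewrite big_pred1_eq (eq_bigr (fun _ => 1 - p)); last by move=> i _; rewrite /w eqxx.
  by rewrite prodr_const card_ord.
congr (_ - _).
transitivity (\prod_i (if ~~ x i then 1 - p else 1)).
  by apply: eq_bigr => i _; rewrite big_bool /w; case: (x i) => /=; ring.
by rewrite -big_mkcond /= prodr_const /zeros cardsE.
Qed.
End Bits.

Lemma exists_max (R : realType) (k : nat) (g : 'I_k -> R) : (0 < k)%N ->
  exists i0, forall j, g j <= g i0.
Proof.
move=> k0; case: (@arg_maxP _ _ _ (Ordinal k0) xpredT g isT) => i _ H.
by exists i => j; exact: H.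
Qed.

Lemma zeros_lb n (x y : bits n) : (zeros x <= zeros y + bcnt x y)%N.
Proof.
rewrite /zeros /bcnt; apply: leq_trans (leq_card_setU _ _); apply: subset_leq_card.
by apply/subsetP => i; rewrite !inE; case: (x i); case: (y i).
Qed.

Lemma zeros_good n (x y : bits n) : good x y -> (zeros x < zeros y)%N.
Proof.
case/andP => Hb Hy; apply: proper_card; apply/properP; split.
  apply/subsetP => i; rewrite !inE => Hx; move: Hb; rewrite /bcnt cards_eq0 => /eqP/setP/(_ i).
  by rewrite !inE; move: Hx; case: (x i); case: (y i).
have [i Hi] : exists i, y i != x i.
  by apply/existsP; move: Hy; apply: contraR; rewrite negb_exists => /forallP H; apply/eqP/ffunP => i; apply/eqP; move: (H i); rewrite negbK.
have H0 : ~~ (~~ x i && y i).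
  apply/negP => H; move: Hb; rewrite /bcnt cards_eq0 => /eqP Hb.
  have : i \in [set i | ~~ x i && y i] by rewrite inE.
  by rewrite Hb in_set0.
exists i; rewrite !inE; move: Hi H0; case: (x i); case: (y i) => //=.
Qed.

Lemma pointwise (R : realType) n k (f : bits n -> R) (x : bits n)
  (ys : {ffun 'I_k -> bits n}) : (0 < k)%N ->
  (zeros x)%:R + \prod_i (good x (ys i))%:R - \sum_i (bcnt x (ys i))%:R
   <= (\sum_(i in best_set f ys) (zeros (ys i))%:R) / (#|best_set f ys|)%:R :> R.
Proof.
move=> k0; set L := _ - _.
have [i0 Hi0] := exists_max (fun i => f (ys i)) k0.
have B0 : (0 < #|best_set f ys|)%N.
  apply/card_gt0P; exists i0; rewrite inE; apply/forallP => j; exact: Hi0.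
rewrite ler_pdivlMr ?ltr0n //.
have -> : L * #|best_set f ys|%:R = \sum_(i in best_set f ys) L by rewrite sumr_const mulr_natr.
apply: ler_sum => i _.
case: (boolP [forall j, good x (ys j)]) => [/forallP Hg | Hng].
  rewrite /L big1 ?mulr1; last by move=> j _; rewrite Hg.
  rewrite big1 ?subr0; last first.
    by move=> j _; move: (Hg j) => /andP[/eqP -> _].
  by rewrite natr1 ler_nat; exact: zeros_good.
have [j Hj] : exists j, ~~ good x (ys j).
  by move: Hng; rewrite negb_forall => /existsP.
rewrite /L (bigD1 j) //= (negbTE Hj) mul0r addr0.
rewrite lerBlDr (bigD1 i) //=.
have H1 := zeros_lb x (ys i).
have H2 : 0 <= \sum_(l | l != i) (bcnt x (ys l))%:R :> R by apply: sumr_ge0.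
move: H1; rewrite -(ler_nat R) natrD => H1; lra.
Qed.

Lemma ys_bound (R : realType) n (c : R) k (f : bits n -> R) (x : bits n) :
  (0 < k)%N -> 0 <= c / n%:R <= 1 ->
  (zeros x)%:R + (\sum_y mut_prob c x y * (good x y)%:R) ^+ k
     - k%:R * ((zeros x)%:R * (c / n%:R)) <= exp_next_zeros c k f x.
Proof.
move=> k0 /andP[p0 p1].
have P0 : forall y, 0 <= mut_prob c x y.
  move=> y; apply: prodr_ge0 => i _; case: (_ == _) => //; lra.
set D := fun (i : 'I_k) y => mut_prob c x y.
have HD : forall i, \sum_y D i y = 1 by move=> i; exact: mut_sum.
apply: le_trans (_ : \sum_(ys : {ffun 'I_k -> bits n}) (\prod_i D i (ys i)) *
   ((zeros x)%:R + \prod_i (good x (ys i))%:R - \sum_i (bcnt x (ys i))%:R) <= _).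
  have -> : \sum_(ys : {ffun 'I_k -> bits n}) (\prod_i D i (ys i)) *
   ((zeros x)%:R + \prod_i (good x (ys i))%:R - \sum_i (bcnt x (ys i))%:R) =
   (zeros x)%:R * \sum_(ys : {ffun 'I_k -> bits n}) (\prod_i D i (ys i))
   + \sum_(ys : {ffun 'I_k -> bits n}) (\prod_i D i (ys i)) * \prod_i (good x (ys i))%:R
   - \sum_i \sum_(ys : {ffun 'I_k -> bits n}) (\prod_i D i (ys i)) * (bcnt x (ys i))%:R.
    rewrite mulr_sumr -big_split /= (exchange_big _ _ _ _ xpredT) -sumrB /=.
    apply: eq_bigr => ys _; rewrite -mulr_sumr; ring.
  have S1 : \sum_(ys : {ffun 'I_k -> bits n}) \prod_i D i (ys i) = 1.
    by rewrite (sum_ffun_prod D); apply: big1 => i _; exact: HD.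
  have S2 : \sum_(ys : {ffun 'I_k -> bits n}) (\prod_i D i (ys i)) * \prod_i (good x (ys i))%:R
      = (\sum_y mut_prob c x y * (good x y)%:R) ^+ k.
    by rewrite prod_event /D prodr_const card_ord.
  have S3 : forall i, \sum_(ys : {ffun 'I_k -> bits n}) (\prod_i D i (ys i)) * (bcnt x (ys i))%:R
      = (zeros x)%:R * (c / n%:R).
    move=> i; rewrite -exp_b.
    exact: (@marginal _ _ _ D (fun y => (bcnt x y)%:R) i HD).
  rewrite S1 S2 (eq_bigr _ (fun i _ => S3 i)) sumr_const card_ord !mulr1.
  by rewrite mulr_natl.
apply: ler_sum => ys _; apply: ler_wpM2l; first by apply: prodr_ge0 => i _; exact: P0.
exact: pointwise.
Qed.

Lemma q_bound (R : realType) n (c : R) (x : bits n) (eps : R) :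
  0 < c -> (0 < n)%N -> c <= n%:R -> 0 < eps -> eps <= 1/2 -> eps * c <= 1/2 ->
  (zeros x)%:R <= eps * n%:R ->
  c / (2 * (2 + c)) <= (1 - c / n%:R) ^+ (zeros x) - (1 - c / n%:R) ^+ n.
Proof.
move=> c0 n0 cn e0 e1 ec Zn.
have n0' : 0 < n%:R :> R by rewrite ltr0n.
set p := c / n%:R.
have np : p * n%:R = c by rewrite /p mulfVK // gt_eqF.
have p0 : 0 <= p by rewrite /p divr_ge0 // ltW.
have p1 : p <= 1 by rewrite /p ler_pdivrMr // mul1r.
set Z := zeros x.
have ZN : (Z <= n)%N.
  by rewrite /Z /zeros; apply: leq_trans (max_card _) _; rewrite card_ord.
have Zp : Z%:R * p <= eps * c.
  have := ler_wpM2r p0 Zn; rewrite -np; nra.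
have hv := @bern_low R p Z (introT andP (conj p0 p1)).
set m := (n - Z)%N.
have hm : m%:R = n%:R - Z%:R :> R by rewrite natrB.
have mp : c / 2 <= m%:R * p.
  rewrite hm mulrBl [n%:R * p]mulrC np.
  have : eps * c <= c / 2 by nra.
  lra.
have hu := @bern_up R p m (introT andP (conj p0 p1)).
rewrite -(subnKC ZN) -/m exprD.
set v := (1 - p) ^+ Z in hv *.
set u := (1 - p) ^+ m in hu *.
have u0 : 0 <= u by rewrite /u exprn_ge0 //; lra.
have v0 : 1/2 <= v by lra.
have uc : u * (2 + c) <= 2.
  have : u * (m%:R * p) >= u * (c / 2) by apply: ler_wpM2l.
  lra.
rewrite ler_pdivrMr; last by nra.
have h1 : 0 <= v * (2 - u * (2 + c)) by apply: mulr_ge0; lra.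
have h2 : 0 <= (v - 1/2) * c by apply: mulr_ge0; lra.
nra.
Qed.

Unset Implicit Arguments. Set Strict Implicit.

Theorem mainTheorem18 (R : realType) (c F : R) :
  0 < c -> 1 < F ->
  exists eps alpha2 : R, 0 < eps /\ 0 < alpha2 /\
    forall s : R, 0 < s ->
    exists N : nat, forall n : nat, (N <= n)%N ->
      forall (x : bits n) (lam : R) (f : bits n -> R),
        monotone_fun f ->
        1 <= lam -> lam <= F ->
        (zeros x)%:R <= eps * n%:R ->
        alpha2 <= drift_Z c lam f x.
Proof.
move=> c0 F1.
set K := Num.truncn (F + 2^-1).
set q0 := c / (2 * (2 + c)).
have q00 : 0 < q0 by rewrite /q0 divr_gt0 //; nra.
have q01 : q0 <= 1 by rewrite /q0 ler_pdivrMr ?mul1r; nra.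
set a := q0 ^+ K / 2.
have a0 : 0 < a by rewrite /a divr_gt0 // exprn_gt0.
have a1 : a <= 1/2 by have := exprn_ile1 K (ltW q00) q01; rewrite /a; lra.
have K0 : 0 <= K%:R :> R by rewrite ler0n.
set eps := a / ((K%:R + 2) * (c + 2)).
have D0 : 0 < (K%:R + 2) * (c + 2) by nra.
have epsE : eps * ((K%:R + 2) * (c + 2)) = a by rewrite /eps mulfVK // gt_eqF.
have e0 : 0 < eps by rewrite /eps divr_gt0.
exists eps, a; split => //; split => // s _.
exists (Num.truncn c).+2 => n Hn x lam f _ l1 lF Zn.
have n0 : (0 < n)%N by apply: leq_trans Hn.
have cn : c <= n%:R.
  apply: le_trans (ltW (truncnS_gt c)) _; rewrite ler_nat; exact: ltnW.
have e1 : eps <= 1/2 by nra.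
have ec : eps * c <= 1/2 by nra.
have Kec : K%:R * (eps * c) <= a by nra.
have n0' : 0 < n%:R :> R by rewrite ltr0n.
set p := c / n%:R.
have np : p * n%:R = c by rewrite /p mulfVK // gt_eqF.
have p0 : 0 <= p by rewrite /p divr_ge0 // ltW.
have p1 : p <= 1 by rewrite /p ler_pdivrMr // mul1r.
set k := round_nat lam.
have k0 : (0 < k)%N by rewrite /k /round_nat truncn_gt0; lra.
have kK : (k <= K)%N by rewrite /k /round_nat /K; apply: le_truncn; lra.
have hq := @q_bound R n c x eps c0 n0 cn e0 e1 ec Zn.
have hy := @ys_bound R n c k f x k0 (introT andP (conj p0 p1)).
rewrite /drift_Z -/k.
rewrite prob_good in hy.
set Q := _ - _ in hq hy.
have hQk : q0 ^+ K <= Q ^+ k.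
  apply: le_trans (_ : q0 ^+ k <= _).
    exact: ler_wiXn2l (ltW q00) q01 _ _ kK.
  by apply: lerXn2r; rewrite ?nnegrE ?(ltW q00) //; apply: le_trans hq; apply: ltW.
have Zp : (zeros x)%:R * p <= eps * c.
  have := ler_wpM2r p0 Zn; rewrite -np; nra.
have Zp0 : 0 <= (zeros x)%:R * p by apply: mulr_ge0 => //; rewrite ler0n.
have kZ : k%:R * ((zeros x)%:R * p) <= a.
  apply: le_trans Kec.
  have kK' : k%:R <= K%:R :> R by rewrite ler_nat.
  nra.
have : q0 ^+ K = 2 * a by rewrite /a; field.
move: hy; rewrite -/p; lra. Qed.
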